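(* Let $g:[-1,1]\to\mathbb{R}$ be the constant function $g(x)=1/2$. For every univariate ReLU neural network $f:\mathbb{R}\to\mathbb{R}$ of any depth and any layer widths whose biases are all zero, one has $$\int_{-1}^{1}\big(g(x)-f(x)\big)^2\,dx\;\ge\;\frac18 .$$ Consequently, for any $\epsilon<1/8$ there is no such bias-free ReLU network approximating $g$ to squared-error (MSE integral) at most $\epsilon$ on $[-1,1]$.
   Context: A bias-free ReLU network computes $x\mapsto \bm{W}^{(L)}\phi(\bm{W}^{(L-1)}\cdots\phi(\bm{W}^{(1)}x))$ (with the output layer either linear or also followed by $\phi$), where $\phi(x)=\max(x,0)$ is applied componentwise and the $\bm{W}^{(l)}$ are real matrices of compatible sizes. *)

(* Defs.v *)
From HB Require Import structures.
From mathcomp Require Import all_boot all_order all_algebra.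
From mathcomp Require Import all_classical all_reals all_analysis.
Set Implicit Arguments. Unset Strict Implicit. Unset Printing Implicit Defensive.
Import Order.TTheory GRing.Theory Num.Theory.
Local Open Scope ring_scope.

Definition relu {R : realType} (x : R) : R := Num.max x 0.

(* A bias-free ReLU network whose current input has dimension n.
   [Out W]     : final weight matrix W : 'M_(1, n) (output dimension 1).
   [Hid W N]   : hidden layer W : 'M_(m, n) followed by phi componentwise,
                 then the rest of the network N taking input of dimension m. *)
Inductive net (R : realType) : nat -> Type :=
| Out n (W : 'M[R]_(1, n)) : net R n
| Hid n m (W : 'M[R]_(m, n)) (N : net R m) : net R n.

Fixpoint net_eval (R : realType) n (N : net R n) : 'cV[R]_n -> R :=
  match N in net _ k return 'cV[R]_k -> R with
  | Out _ W => fun v => (W *m v) 0 0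
  | Hid _ _ W N' => fun v => net_eval N' (map_mx relu (W *m v))
  end.

Definition realize (R : realType) (N : net R 1) (relu_out : bool) (x : R) : R :=
  let y := net_eval N (const_mx x) in if relu_out then relu y else y.

(* Main.v *)
Require Import Defs.
From HB Require Import structures.
From mathcomp Require Import all_boot all_order all_algebra.
From mathcomp Require Import all_classical all_reals all_analysis.
From mathcomp Require Import measurable_realfun.
From mathcomp Require Import ring lra.
Import Order.TTheory GRing.Theory Num.Theory.
Local Open Scope ring_scope.
Local Open Scope classical_set_scope.

Section S.
Variable R : realType.
Lemma relu_id (x : R) : 0 <= x -> relu x = x.
Proof.
move=> x0; rewrite /relu; case: ger0P => // xlt.
by move: (lt_le_trans xlt x0); rewrite ltxx.
Qed.

Lemma relu_0 (x : R) : x <= 0 -> relu x = 0.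
Proof.
move=> x0; rewrite /relu; case: ler0P => // xlt.
by move: (lt_le_trans xlt x0); rewrite ltxx.
Qed.

Lemma relu_scale (t y : R) : 0 <= t -> relu (t * y) = t * relu y.
Proof. by move=> t0; rewrite /relu maxr_pMr // mulr0. Qed.

Lemma net_hom n (N : net R n) t v : 0 <= t ->
  net_eval N (t *: v) = t * net_eval N v.
Proof.
move=> t0; elim: N v => [k W|k m W N IH] v /=.
  by rewrite !mxE mulr_sumr; apply: eq_bigr => j _; rewrite !mxE mulrCA.
rewrite -IH; congr (net_eval N _); apply/matrixP => i j.
rewrite /map_mx !mxE -relu_scale //; congr relu.
by rewrite mulr_sumr; apply: eq_bigr => l _; rewrite !mxE mulrCA.
Qed.

Lemma realize_hom (N : net R 1) b t s : 0 <= t ->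
  realize N b (t * s) = t * realize N b s.
Proof.
move=> t0; rewrite /realize.
have -> : const_mx (t * s) = t *: (const_mx s : 'cV[R]_1).
  by apply/matrixP => i j; rewrite !mxE.
by rewrite net_hom //; case: b => //; rewrite relu_scale.
Qed.

Lemma realize_form (N : net R 1) b x :
  realize N b x = realize N b 1 * relu x + realize N b (-1) * relu (- x).
Proof.
case: (leP 0 x) => x0.
  rewrite relu_id // relu_0 ?oppr_le0 //.
  by rewrite -{1}(mulr1 x) realize_hom // mulr0 addr0 mulrC.
rewrite relu_0 ?ltW // relu_id ?oppr_ge0 ?ltW //.
rewrite {1}(_ : x = (- x) * (-1)); last by rewrite mulrN1 opprK.
by rewrite realize_hom ?oppr_ge0 ?ltW // mulr0 add0r mulrC.
Qed.

Lemma horner_LR (p : {poly R}) (a b : R) :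
  derivable_oo_LRcontinuous (horner p) a b.
Proof.
split.
+ by move=> x _; apply: derivable_horner.
+ by apply: cvg_at_right_filter; exact: continuous_horner.
+ by apply: cvg_at_left_filter; exact: continuous_horner.
Qed.

Lemma poly_ftc (p : {poly R}) (a b : R) : a < b ->
  (\int[@lebesgue_measure R]_(x in `[a, b]) ((p^`()).[x])%:E =
   (p.[b] - p.[a])%:E)%E.
Proof.
move=> ab; rewrite EFinB.
rewrite (@continuous_FTC2 R (horner p^`()) (horner p) a b ab).
- done.
- exact: (derivable_oo_LRcontinuous_within (horner_LR p^`() a b)).
- exact: horner_LR.
- by move=> x _; rewrite -derivE.
Qed.

Definition P (a : R) : {poly R} :=
  (1/4) *: 'X - (a/2) *: 'X^2 + (a^+2/3) *: 'X^3.

Lemma P_deriv a x : (P a)^`().[x] = (1/2 - a * x) ^+ 2.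
Proof.
rewrite /P !(derivB, derivD, derivZ, derivX, derivXn) /=.
rewrite !(hornerD, hornerN, hornerZ, hornerMn, hornerXn, hornerC, hornerE) /=.
by rewrite !mulr2n; field.
Qed.

Lemma int_P a lo hi : lo < hi ->
  (\int[@lebesgue_measure R]_(x in `[lo, hi]) ((1/2 - a * x) ^+ 2)%:E =
   ((P a).[hi] - (P a).[lo])%:E)%E.
Proof.
move=> lh; rewrite -poly_ftc //; apply: eq_integral => x _.
by rewrite P_deriv.
Qed.

Lemma P_val a x : (P a).[x] = x/4 - a/2 * x^+2 + a^+2/3 * x^+3.
Proof.
rewrite /P !(hornerD, hornerN, hornerZ, hornerMn, hornerXn, hornerC, hornerE) /=.
by field.
Qed.

Lemma lower (N : net R 1) (b : bool) :
  ((1 / 8 : R)%:E <=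
      \int[@lebesgue_measure R]_(x in `[(-1)%R, 1%R])
        ((1 / 2 - realize N b x) ^+ 2)%:E)%E.
Proof.
set A := realize N b 1; set C := realize N b (-1).
pose g x := (1 / 2 - (A * relu x + C * relu (- x))) ^+ 2.
have -> : (\int[@lebesgue_measure R]_(x in `[(-1)%R, 1%R])
        ((1 / 2 - realize N b x) ^+ 2)%:E)%E =
    (\int[@lebesgue_measure R]_(x in `[(-1)%R, 1%R]) (g x)%:E)%E.
  by apply: eq_integral => x _; rewrite /g realize_form.
have mg : measurable_fun setT g.
  apply: measurable_funX; apply: measurable_funB => //.
  apply: measurable_funD; apply: measurable_funM => //;
    rewrite /relu; apply: measurable_maxr => //.
rewrite (@itv_bndbnd_setU _ _ (BLeft (-1)) (BLeft 0) (BRight 1)); last 2 first.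
- by rewrite bnd_simp; lra.
- by rewrite bnd_simp; lra.
rewrite ge0_integral_setU //=; last 3 first.
- by apply: measurableT_comp => //; apply: measurable_funTS.
- by move=> x _; rewrite lee_fin sqr_ge0.
- rewrite disj_set2E; apply/eqP/seteqP; split => x //=.
  by rewrite !in_itv /= => -[/andP[_ h1] /andP[h2 _]]; lra.
rewrite integral_itv_bndo_bndc; last first.
  by apply: measurableT_comp => //; apply: measurable_funTS.
have -> : (\int[@lebesgue_measure R]_(x in `[(-1)%R, 0%R]) (g x)%:E)%E =
    (\int[@lebesgue_measure R]_(x in `[(-1)%R, 0%R]) ((1/2 - (- C) * x) ^+ 2)%:E)%E.
  apply: eq_integral => x; rewrite inE /= in_itv /= => /andP[_ h].
  by rewrite /g relu_0 // relu_id ?oppr_ge0 // mulr0 add0r mulrN mulNr.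
have -> : (\int[@lebesgue_measure R]_(x in `[0%R, 1%R]) (g x)%:E)%E =
    (\int[@lebesgue_measure R]_(x in `[0%R, 1%R]) ((1/2 - A * x) ^+ 2)%:E)%E.
  apply: eq_integral => x; rewrite inE /= in_itv /= => /andP[h _].
  by rewrite /g relu_id // relu_0 ?oppr_le0 // mulr0 addr0.
rewrite !int_P ?ltr01 ?ltrN10 // !P_val -EFinD lee_fin.
rewrite -subr_ge0.
have E : forall r : R, r = 1/8 + ((A - 3/4) ^+ 2 / 3 + (C - 3/4) ^+ 2 / 3) -> 0 <= r - 1/8.
  by move=> r ->; rewrite addrC addKr; apply: addr_ge0; apply: divr_ge0 => //; exact: sqr_ge0.
apply: E.
by rewrite !expr0n !expr1n /=; field.
Qed.
End S.

Theorem mainTheorem2 (R : realType) :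
  (forall (N : net R 1) (relu_out : bool),
     ((1 / 8 : R)%:E <=
      \int[@lebesgue_measure R]_(x in `[(-1)%R, 1%R])
        ((1 / 2 - realize N relu_out x) ^+ 2)%:E)%E)
  /\
  (forall eps : R, eps < 1 / 8 ->
     ~ exists (N : net R 1) (relu_out : bool),
         (\int[@lebesgue_measure R]_(x in `[(-1)%R, 1%R])
            ((1 / 2 - realize N relu_out x) ^+ 2)%:E <= eps%:E)%E).
Proof.
split; first exact: lower.
move=> eps heps [N [b hb]].
have := le_trans (@lower R N b) hb; rewrite lee_fin => h.
by move: (le_lt_trans h heps); rewrite ltxx.
Qed.
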